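(* Let $G$ be a group, $F$ a field of characteristic $0$, and let $R=M_n(F)$ carry the elementary $G$-grading induced by an $n$-tuple $(g_1,\dots,g_n)$ of pairwise distinct elements of $G$. For $h\in\mathrm{supp}(R)$ put $M_h=\sum_{g_k^{-1}g_l=h}e_{kl}$. Let $h_1,\dots,h_k\in\mathrm{supp}(R)$ with $h_1h_2\cdots h_k=1_G$. Then the matrices $M_{h_1}M_{h_2}\cdots M_{h_k}$ and $M_{h_2}\cdots M_{h_k}$ have the same number of nonzero rows.
   Context: The elementary $G$-grading on $M_n(F)$ induced by $(g_1,\dots,g_n)\in G^n$ is $R=\bigoplus_{g\in G}R_g$ with $R_g=\mathrm{span}\{e_{pq}: g_p^{-1}g_q=g\}$, where $e_{pq}$ are the matrix units. The support is $\mathrm{supp}(R)=\{g\in G: R_g\neq 0\}$. *)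

(* Defs.v *)
From HB Require Import structures.
From mathcomp Require Import all_boot all_order all_algebra.
Set Implicit Arguments. Unset Strict Implicit. Unset Printing Implicit Defensive.
Import GRing.Theory.

Definition Mh (G : groupType) (F : fieldType) (n : nat) (g : 'I_n -> G) (h : G)
  : 'M[F]_n :=
  \matrix_(k, l) ((((g k)^-1 * g l)%g == h)%:R)%R.

Definition in_supp (G : groupType) (n : nat) (g : 'I_n -> G) (h : G) : bool :=
  [exists k : 'I_n, exists l : 'I_n, ((g k)^-1 * g l)%g == h].

Definition gprod (G : groupType) (s : seq G) : G := foldr (fun x y => (x * y)%g) 1%g s.

Definition Mprod (G : groupType) (F : fieldType) (n : nat) (g : 'I_n -> G)
  (s : seq G) : 'M[F]_n :=
  foldr (fun h A => (Mh F g h *m A)%R) (1%:M)%R s.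

Definition nz_rows (F : fieldType) (m n : nat) (A : 'M[F]_(m, n)) : nat :=
  #|[set i : 'I_m | row i A != 0%R]|.

(* Main.v *)
Require Import Defs.
From HB Require Import structures.
From mathcomp Require Import all_boot all_order all_algebra.

Set Implicit Arguments. Unset Strict Implicit. Unset Printing Implicit Defensive.
Import GRing.Theory.

Local Open Scope ring_scope.
Section Aux.
Variables (G : groupType) (F : fieldType) (n : nat) (g : 'I_n -> G).
Hypothesis ginj : injective g.

Lemma eq_divg (x y h : G) : (((x^-1 * y)%g) == h) = (y == (x * h)%g).
Proof.
by apply/eqP/eqP => [<-|->]; [rewrite mulVKg | rewrite mulKg].
Qed.

Fixpoint ok (s : seq G) (x : G) : bool :=
  if s is h :: s' then [exists l, g l == (x * h)%g] && ok s' (x * h)%g else true.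

Lemma MprodE s i j :
  Mprod F g s i j = ((ok s (g i)) && (g j == (g i * gprod s)%g))%:R.
Proof.
elim: s i j => [|h s IH] i j /=.
  rewrite /Mprod /= mxE mulg1 eq_sym.
  by rewrite (inj_eq ginj).
rewrite /Mprod /= -/(Mprod F g s) mxE.
case: (pickP (fun l => g l == (g i * h)%g)) => [l Hl|Hn].
  rewrite (bigD1 l) //= big1 ?addr0.
    rewrite !mxE IH eq_divg Hl mul1r (eqP Hl) mulgA.
    have -> : [exists l0, g l0 == (g i * h)%g] by apply/existsP; exists l.
    by [].
  move=> l' Hl'; rewrite !mxE eq_divg.
  case E: (g l' == _); last by rewrite mul0r.
  by move: Hl'; rewrite -(eqP Hl) in E; rewrite (ginj (eqP E)) eqxx.
rewrite big1.
  have -> : [exists l0, g l0 == (g i * h)%g] = false.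
    by apply/existsP => -[l]; rewrite Hn.
  by [].
by move=> l _; rewrite !mxE eq_divg Hn mul0r.
Qed.

Lemma ok_im s x : ok s x -> [exists l, g l == x] ->
  [exists l, g l == (x * gprod s)%g].
Proof.
elim: s x => [|h s IH] x /=; first by rewrite mulg1.
case/andP=> H1 H2 _; rewrite mulgA; exact: IH.
Qed.

Lemma nzrowE s i : (row i (Mprod F g s) != 0) = ok s (g i).
Proof.
case E: (ok s (g i)).
  have Him : [exists l, g l == g i] by apply/existsP; exists i.
  have /existsP[j /eqP Hj] := ok_im E Him.
  apply/eqP => /rowP /(_ j); rewrite !mxE MprodE E Hj eqxx /=.
  by apply/eqP; rewrite oner_eq0.
apply/negbTE; rewrite negbK; apply/eqP/rowP => j.
by rewrite !mxE MprodE E.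
Qed.

End Aux.

Local Close Scope ring_scope.
Theorem mainTheorem2 (G : groupType) (F : fieldType) (n : nat)
  (g : 'I_n -> G) (h1 : G) (hs : seq G) :
  [pchar F]%R =i pred0 ->
  injective g ->
  all (in_supp g) (h1 :: hs) ->
  gprod (h1 :: hs) = 1%g ->
  nz_rows (Mprod F g (h1 :: hs)) = nz_rows (Mprod F g hs).
Proof.
move=> _ ginj _ Hprod.
rewrite /nz_rows.
set A := [set i | _]; set B := [set i | _].
pose f i := odflt i [pick l | g l == (g i * h1)%g].
have fP i : i \in A -> g (f i) = (g i * h1)%g /\ f i \in B.
  rewrite inE nzrowE //= => /andP[/existsP[l Hl] Hok].
  rewrite /f; case: pickP => [l' /eqP Hl'|/(_ l)]; last by rewrite Hl.
  by split=> //; rewrite inE nzrowE // Hl'.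
have finj : {in A &, injective f}.
  move=> i j /fP[Hi _] /fP[Hj _] E.
  by apply: ginj; apply: (mulIg h1); rewrite -Hi -Hj E.
rewrite -(card_in_imset finj); suff -> : f @: A = B by [].
apply/setP => l; apply/imsetP/idP => [[i /fP[_ Hi] ->]//|Hl].
have Hinv : gprod hs = (h1^-1)%g.
  by apply: (mulgI h1); rewrite mulgV -Hprod.
move: (Hl); rewrite inE nzrowE // => Hok.
have Him : [exists l', g l' == g l] by apply/existsP; exists l.
have /existsP[i /eqP Hi] := ok_im Hok Him.
rewrite Hinv in Hi.
have HiA : i \in A.
  rewrite inE nzrowE //= Hi mulgVK Hok andbT.
  by apply/existsP; exists l.
exists i => //.
have [E _] := fP i HiA.
by apply: ginj; rewrite E Hi mulgVK.
Qed.
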